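(* Let $L = L_p + \varepsilon L_d \in \mathbb{DH}[t]$ be a line polynomial, let $h, \ell \in \mathbb{R}[t]$ be nonzero, and let $Q = q_0 + q_1\mathbf{i} + q_2\mathbf{j} + q_3\mathbf{k} \in \mathbb{H}[t]$ be such that $P = Qh\ell$ satisfies $P\mathbf{k}\overline{P} = hL_p$. Write $M = m_1\mathbf{i} + m_2\mathbf{j} + m_3\mathbf{k} = Q\mathbf{k}\overline{Q}$ and $k_5\mathbf{i} + k_6\mathbf{j} + k_7\mathbf{k} = K_d := L_d/\ell$, and assume $m_3 \neq 0$ and $q_3 \neq 0$. Then all solutions $D = d_0 + d_1\mathbf{i} + d_2\mathbf{j} + d_3\mathbf{k}$, with $d_0,\dots,d_3$ in the field of real rational functions $\mathbb{R}(t)$, of the equation $$-P\mathbf{k}\overline{D} - D\mathbf{k}\overline{P} = hL_d$$ are given by $$d_1 = -\frac{2d_0q_2}{2q_3} + \frac{k_5(q_2^2-q_3^2)+k_6(q_0q_3-q_1q_2)}{2q_3m_3},$$ $$d_2 = \frac{2d_0q_1}{2q_3} + \frac{k_5(-q_0q_3-q_1q_2)+k_6(q_1^2-q_3^2)}{2q_3m_3},$$ $$d_3 = -\frac{2d_0q_0}{2q_3} + \frac{k_5(q_1q_3+q_0q_2)+k_6(q_2q_3-q_0q_1)}{2q_3m_3},$$ where $d_0 \in \mathbb{R}(t)$ is arbitrary.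
   Context: $\mathbb{H}$ denotes the real quaternions with units $\mathbf{i},\mathbf{j},\mathbf{k}$ and conjugation $\overline{p_0 + p_1\mathbf{i} + p_2\mathbf{j} + p_3\mathbf{k}} = p_0 - p_1\mathbf{i} - p_2\mathbf{j} - p_3\mathbf{k}$; $\mathbb{DH} = \mathbb{H} + \varepsilon\mathbb{H}$ with $\varepsilon^2=0$, $\varepsilon$ central. $\mathbb{H}[t]$, $\mathbb{DH}[t]$ are polynomial rings in a real indeterminate $t$ commuting with the coefficients; conjugation acts coefficientwise. A line polynomial is $L = L_p + \varepsilon L_d \in \mathbb{DH}[t]$ with $L_p, L_d \in \mathbb{H}[t]$ vectorial (zero scalar part), $L_p\overline{L_d} + L_d\overline{L_p} = 0$, and $L_p \neq 0$. (In the paper, $\ell$ is the minimal saturating factor of $L_p$: the monic real polynomial of minimal degree with $L_p\ell = P'\mathbf{k}\overline{P'}$ for some $P' \in \mathbb{H}[t]$.) *)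

(* Defs.v *)
From HB Require Import structures.
From mathcomp Require Import all_boot all_order all_algebra.
From mathcomp Require Import fraction.
Set Implicit Arguments. Unset Strict Implicit. Unset Printing Implicit Defensive.
Import GRing.Theory Num.Theory.
Local Open Scope ring_scope.

(* Quaternions with coefficients in a commutative ring A:
   Quat a0 a1 a2 a3 = a0 + a1 i + a2 j + a3 k.
   With A = {poly R} this is H[t]; with A = {fraction {poly R}} it is
   the quaternions over the field R(t) of real rational functions. *)
Record quat (A : Type) := Quat { qr : A; qi : A; qj : A; qk : A }.

Section QuatOps.
Variable A : comNzRingType.

Definition qadd (x y : quat A) : quat A :=
  Quat (qr x + qr y) (qi x + qi y) (qj x + qj y) (qk x + qk y).
Definition qopp (x : quat A) : quat A :=
  Quat (- qr x) (- qi x) (- qj x) (- qk x).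
Definition qmul (x y : quat A) : quat A :=
  Quat (qr x * qr y - qi x * qi y - qj x * qj y - qk x * qk y)
       (qr x * qi y + qi x * qr y + qj x * qk y - qk x * qj y)
       (qr x * qj y - qi x * qk y + qj x * qr y + qk x * qi y)
       (qr x * qk y + qi x * qj y - qj x * qi y + qk x * qr y).
Definition qconj (x : quat A) : quat A :=
  Quat (qr x) (- qi x) (- qj x) (- qk x).
Definition qscale (c : A) (x : quat A) : quat A :=
  Quat (c * qr x) (c * qi x) (c * qj x) (c * qk x).
Definition qzero : quat A := Quat 0 0 0 0.
Definition qkk : quat A := Quat 0 0 0 1.
Definition vectorial (x : quat A) : Prop := qr x = 0.
End QuatOps.

Definition qmap (A B : Type) (f : A -> B) (x : quat A) : quat B :=
  Quat (f (qr x)) (f (qi x)) (f (qj x)) (f (qk x)).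

(* Line polynomial L = Lp + eps Ld in DH[t], given by its primal and dual parts. *)
Definition line_poly (R : realFieldType) (Lp Ld : quat {poly R}) : Prop :=
  [/\ vectorial Lp, vectorial Ld,
      qadd (qmul Lp (qconj Ld)) (qmul Ld (qconj Lp)) = qzero _
    & Lp <> qzero _].

Notation tofrac := (@FracField.tofrac _).
Notation "x %:F" := (@FracField.tofrac _ x) : ring_scope.

(* Main.v *)
Require Import Defs.
From HB Require Import structures.
From mathcomp Require Import all_boot all_order all_algebra.
From mathcomp Require Import fraction.
From mathcomp Require Import ring lra.
Import GRing.Theory Num.Theory.
Local Open Scope ring_scope.

Lemma exists_nonroot (R : numDomainType) (p : {poly R}) : p != 0 -> exists x, p.[x] != 0.
Proof.
move=> p0; set rs := [seq i%:R | i <- iota 0 (size p)] : seq R.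
case: (boolP (all (root p) rs)) => H.
  have := max_poly_roots p0 H.
  rewrite map_inj_uniq ?iota_uniq; last exact: (mulrIn (oner_neq0 R)).
  by rewrite size_map size_iota ltnn => /(_ isT).
by move/allPn: H => [x _ hx]; exists x.
Qed.

Lemma sos_neq0 (R : realFieldType) (a0 a1 a2 a3 : {poly R}) : a3 != 0 ->
  a0^+2 + a1^+2 + a2^+2 + a3^+2 != 0.
Proof.
case/exists_nonroot=> x hx; apply/eqP => /(congr1 (horner^~ x)).
rewrite !hornerE => h.
have h3 : 0 < a3.[x] ^+ 2 by rewrite exprn_even_gt0.
have := sqr_ge0 a0.[x]; have := sqr_ge0 a1.[x]; have := sqr_ge0 a2.[x].
lra.
Qed.

Lemma two_poly (R : realFieldType) : (2 : {poly R}) != 0.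
Proof. by rewrite -polyC_natr polyC_eq0 pnatr_eq0. Qed.
Section Core.
Variable F : fieldType.
Variables q0 q1 q2 q3 d0 k5 k6 k7 : F.
Hypothesis n2 : (2:F) != 0.
Hypothesis nq3 : q3 != 0.
Let m1 := 2 * (q1*q3 + q0*q2).
Let m2 := 2 * (q2*q3 - q0*q1).
Let m3 := q3^+2 - q2^+2 - q1^+2 + q0^+2.
Hypothesis nm3 : m3 != 0.
Hypothesis nN : q0^+2 + q1^+2 + q2^+2 + q3^+2 != 0.
Hypothesis pl : m1 * k5 + m2 * k6 + m3 * k7 = 0.

Let X1 d1 d2 d3 := q3*d1 + q2*d0 + q1*d3 + q0*d2.
Let X2 d1 d2 d3 := q3*d2 + q2*d3 - q1*d0 - q0*d1.
Let X3 d1 d2 d3 := q3*d3 - q2*d2 - q1*d1 + q0*d0.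
Let f1 := - (2 * d0 * q2) / (2 * q3)
               + (k5 * (q2 ^+ 2 - q3 ^+ 2) + k6 * (q0 * q3 - q1 * q2)) / (2 * q3 * m3).
Let f2 := (2 * d0 * q1) / (2 * q3)
               + (k5 * (- (q0 * q3) - q1 * q2) + k6 * (q1 ^+ 2 - q3 ^+ 2)) / (2 * q3 * m3).
Let f3 := - (2 * d0 * q0) / (2 * q3)
               + (k5 * (q1 * q3 + q0 * q2) + k6 * (q2 * q3 - q0 * q1)) / (2 * q3 * m3).

Lemma fsat : [/\ -2 * X1 f1 f2 f3 = k5, -2 * X2 f1 f2 f3 = k6 & -2 * X3 f1 f2 f3 = k7].
Proof.
have e : m1*k5+m2*k6 = -(m3*k7) by apply/eqP; rewrite -subr_eq0 opprK pl.
have hk7 : k7 = - (m1 * k5 + m2 * k6) / m3 by rewrite e opprK mulrC mulKf.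
rewrite /X1 /X2 /X3 /f1 /f2 /f3 hk7 /m1 /m2 /m3; split; field;
  by rewrite -/m3 nm3 nq3 n2.
Qed.

Lemma core d1 d2 d3 :
  [/\ -2 * X1 d1 d2 d3 = k5, -2 * X2 d1 d2 d3 = k6 & -2 * X3 d1 d2 d3 = k7] <->
  [/\ d1 = f1, d2 = f2 & d3 = f3].
Proof.
split; last by case=> -> -> ->; exact: fsat.
case: fsat => s1 s2 s3 [r1 r2 r3].
set e1 := d1 - f1; set e2 := d2 - f2; set e3 := d3 - f3.
have n2' : (-2 : F) != 0 by rewrite oppr_eq0.
have t1 : q3*e1 + q0*e2 + q1*e3 = 0.
  apply: (mulfI n2'); rewrite mulr0.
  by rewrite -(subrr k5) -{1}r1 -s1 /X1 /e1 /e2 /e3; ring.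
have t2 : -q0*e1 + q3*e2 + q2*e3 = 0.
  apply: (mulfI n2'); rewrite mulr0.
  by rewrite -(subrr k6) -{1}r2 -s2 /X2 /e1 /e2 /e3; ring.
have t3 : -q1*e1 - q2*e2 + q3*e3 = 0.
  apply: (mulfI n2'); rewrite mulr0.
  by rewrite -(subrr k7) -{1}r3 -s3 /X3 /e1 /e2 /e3; ring.
have nz : q3 * (q0^+2 + q1^+2 + q2^+2 + q3^+2) != 0 by rewrite mulf_neq0.
have z1 : e1 = 0.
  apply: (mulfI nz); rewrite mulr0.
  have -> : q3 * (q0^+2 + q1^+2 + q2^+2 + q3^+2) * e1 =
    (q3^+2 + q2^+2) * (q3*e1 + q0*e2 + q1*e3)
    - (q0*q3 + q1*q2) * (-q0*e1 + q3*e2 + q2*e3)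
    + (q0*q2 - q1*q3) * (-q1*e1 - q2*e2 + q3*e3) by ring.
  by rewrite t1 t2 t3; ring.
have z2 : e2 = 0.
  apply: (mulfI nz); rewrite mulr0.
  have -> : q3 * (q0^+2 + q1^+2 + q2^+2 + q3^+2) * e2 =
    (q0*q3 - q1*q2) * (q3*e1 + q0*e2 + q1*e3)
    + (q3^+2 + q1^+2) * (-q0*e1 + q3*e2 + q2*e3)
    - (q2*q3 + q0*q1) * (-q1*e1 - q2*e2 + q3*e3) by ring.
  by rewrite t1 t2 t3; ring.
have z3 : e3 = 0.
  apply: (mulfI nz); rewrite mulr0.
  have -> : q3 * (q0^+2 + q1^+2 + q2^+2 + q3^+2) * e3 =
    (q0*q2 + q1*q3) * (q3*e1 + q0*e2 + q1*e3)
    + (q2*q3 - q0*q1) * (-q0*e1 + q3*e2 + q2*e3)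
    + (q3^+2 + q0^+2) * (-q1*e1 - q2*e2 + q3*e3) by ring.
  by rewrite t1 t2 t3; ring.
by split; apply/eqP; rewrite -subr_eq0; apply/eqP; [exact: z1|exact: z2|exact: z3].
Qed.
End Core.

Lemma quat_eq4 (A : Type) (a0 a1 a2 a3 b0 b1 b2 b3 : A) :
  Quat a0 a1 a2 a3 = Quat b0 b1 b2 b3 <-> [/\ a0 = b0, a1 = b1, a2 = b2 & a3 = b3].
Proof. by split; [case=> -> -> -> -> | case=> -> -> -> ->]. Qed.

Lemma and4_iff (P0 P1 P2 P3 Q1 Q2 Q3 : Prop) : P0 -> (P1 <-> Q1) -> (P2 <-> Q2) ->
  (P3 <-> Q3) -> ([/\ P0, P1, P2 & P3] <-> [/\ Q1, Q2 & Q3]).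
Proof.
move=> p0 [a b] [c d] [e f]; split; first by case=> _ /a ? /c ? /e ?.
by case=> /b ? /d ? /f ?.
Qed.

Lemma eqc {F : fieldType} {c x y a b : F} : c != 0 -> a = c * x -> b = c * y -> (a = b <-> x = y).
Proof. by move=> nc -> ->; split; [exact: mulfI | move->]. Qed.

Lemma linc {R : comPzRingType} (c : R) {x y : R} : x = 0 -> y = c * x -> y = 0.
Proof. by move=> -> ->; rewrite mulr0. Qed.

Theorem lemma3 (R : realFieldType) (Lp Ld : quat {poly R}) (h l : {poly R})
    (Q : quat {poly R}) :
  line_poly Lp Ld -> h != 0 -> l != 0 ->
  let P := qscale (h * l) Q in
  qmul (qmul P (qkk _)) (qconj P) = qscale h Lp ->
  let M := qmul (qmul Q (qkk _)) (qconj Q) in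
  let m3 := (qk M)%:F in
  let q0 := (qr Q)%:F in let q1 := (qi Q)%:F in
  let q2 := (qj Q)%:F in let q3 := (qk Q)%:F in
  let Kd := qscale (l%:F)^-1 (qmap (fun x : {poly R} => x%:F) Ld) in
  let k5 := qi Kd in let k6 := qj Kd in
  qk M != 0 -> qk Q != 0 ->
  forall D : quat {fraction {poly R}},
    let Pf := qmap (fun x : {poly R} => x%:F) P in
    qadd (qopp (qmul (qmul Pf (qkk _)) (qconj D)))
         (qopp (qmul (qmul D (qkk _)) (qconj Pf)))
      = qmap (fun x : {poly R} => x%:F) (qscale h Ld)
    <->
    [/\ qi D = - (2 * qr D * q2) / (2 * q3)
               + (k5 * (q2 ^+ 2 - q3 ^+ 2) + k6 * (q0 * q3 - q1 * q2)) / (2 * q3 * m3),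
        qj D = (2 * qr D * q1) / (2 * q3)
               + (k5 * (- (q0 * q3) - q1 * q2) + k6 * (q1 ^+ 2 - q3 ^+ 2)) / (2 * q3 * m3)
      & qk D = - (2 * qr D * q0) / (2 * q3)
               + (k5 * (q1 * q3 + q0 * q2) + k6 * (q2 * q3 - q0 * q1)) / (2 * q3 * m3)].
Proof.
move=> [hLp0 hLd0 hsum _] hh hl P hP M m3 q0 q1 q2 q3 Kd k5 k6 hm3 hq3 D Pf.
rewrite /P /qmul /qscale /qconj /qkk /= in hP; case: hP => e0 e1 e2 e3.
rewrite /qmul /qadd /qconj /qzero /= in hsum; case: hsum => s0 _ _ _.
rewrite /vectorial in hLp0 hLd0.
have hS : qi Lp * (qi Ld) + qj Lp * (qj Ld) + qk Lp * (qk Ld) = 0.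
  apply: (mulfI (two_poly R)); rewrite mulr0.
  by apply: (linc 1 s0); rewrite hLp0 hLd0; ring.
have e1' : h * qi Lp = (h * l)^+2 * (2 * ((qi Q)*(qk Q) + (qr Q)*(qj Q))) by rewrite -e1; ring.
have e2' : h * qj Lp = (h * l)^+2 * (2 * ((qj Q)*(qk Q) - (qr Q)*(qi Q))) by rewrite -e2; ring.
have e3' : h * qk Lp = (h * l)^+2 * ((qk Q)^+2 - (qj Q)^+2 - (qi Q)^+2 + (qr Q)^+2) by rewrite -e3; ring.
have hpl : 2 * ((qi Q)*(qk Q) + (qr Q)*(qj Q)) * (qi Ld) + 2 * ((qj Q)*(qk Q) - (qr Q)*(qi Q)) * (qj Ld)
           + ((qk Q)^+2 - (qj Q)^+2 - (qi Q)^+2 + (qr Q)^+2) * (qk Ld) = 0.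
  have nz : (h * l)^+2 != 0 by rewrite expf_neq0 // mulf_neq0.
  apply: (mulfI nz); rewrite mulr0.
  have -> : (h * l)^+2 * (2 * ((qi Q)*(qk Q) + (qr Q)*(qj Q)) * (qi Ld) + 2 * ((qj Q)*(qk Q) - (qr Q)*(qi Q)) * (qj Ld)
           + ((qk Q)^+2 - (qj Q)^+2 - (qi Q)^+2 + (qr Q)^+2) * (qk Ld)) =
    ((h * l)^+2 * (2 * ((qi Q)*(qk Q) + (qr Q)*(qj Q)))) * (qi Ld) + ((h * l)^+2 * (2 * ((qj Q)*(qk Q) - (qr Q)*(qi Q)))) * (qj Ld)
    + ((h * l)^+2 * ((qk Q)^+2 - (qj Q)^+2 - (qi Q)^+2 + (qr Q)^+2)) * (qk Ld) by ring.
  rewrite -e1' -e2' -e3'.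
  by apply: (linc h hS); ring.
have em3 : m3 = q3^+2 - q2^+2 - q1^+2 + q0^+2.
  rewrite /m3 /M /qmul /qconj /qkk /=.
  rewrite (_ : _ + _ = (qk Q)^+2 - (qj Q)^+2 - (qi Q)^+2 + (qr Q)^+2); last by ring.
  by rewrite !(tofracD, tofracB, tofracN, tofracXn).
have n2 : (2 : {fraction {poly R}}) != 0.
  by rewrite -(rmorph_nat (@FracField.tofrac {poly R})) tofrac_eq0 two_poly.
have nq3 : q3 != 0 by rewrite tofrac_eq0.
have nm3 : q3^+2 - q2^+2 - q1^+2 + q0^+2 != 0 by rewrite -em3 tofrac_eq0.
have nN : q0^+2 + q1^+2 + q2^+2 + q3^+2 != 0.
  by rewrite -!tofracXn -!tofracD tofrac_eq0 sos_neq0.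
have nl : l%:F != 0 by rewrite tofrac_eq0.
have nh : h%:F != 0 by rewrite tofrac_eq0.
pose k7 := (l%:F)^-1 * (qk Ld)%:F.
have pl : 2 * (q1*q3 + q0*q2) * k5 + 2 * (q2*q3 - q0*q1) * k6
          + (q3^+2 - q2^+2 - q1^+2 + q0^+2) * k7 = 0.
  have := congr1 (@FracField.tofrac _) hpl.
  rewrite tofrac0 !(tofracD, tofracB, tofracN, tofracXn, tofracM) tofrac1 => H.
  by apply: (linc (l%:F)^-1 H); rewrite /k5 /k6 /k7 /Kd /=; ring.
rewrite em3.
apply: (iff_trans _ (@core _ q0 q1 q2 q3 (qr D) k5 k6 k7 n2 nq3 nm3 nN pl (qi D) (qj D) (qk D))).
rewrite /qadd /qmap quat_eq4.
have nc : h%:F * l%:F != 0 := mulf_neq0 nh nl.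
apply: and4_iff.
- rewrite /Pf /P /qopp /qmul /qconj /qkk /qmap /qscale; cbn [qr qi qj qk]; rewrite hLd0 !tofracM tofrac0.
  ring.
- apply: (eqc nc).
    rewrite /Pf /P /q0 /q1 /q2 /q3 /qopp /qmul /qconj /qkk /qmap /qscale; cbn [qr qi qj qk]; rewrite !tofracM; ring.
  rewrite /k5 /Kd /qscale /qmap; cbn [qr qi qj qk]; by rewrite tofracM mulrA (mulfK nl).
- apply: (eqc nc).
    rewrite /Pf /P /q0 /q1 /q2 /q3 /qopp /qmul /qconj /qkk /qmap /qscale; cbn [qr qi qj qk]; rewrite !tofracM; ring.
  rewrite /k6 /Kd /qscale /qmap; cbn [qr qi qj qk]; by rewrite tofracM mulrA (mulfK nl).
- apply: (eqc nc).
    rewrite /Pf /P /q0 /q1 /q2 /q3 /qopp /qmul /qconj /qkk /qmap /qscale; cbn [qr qi qj qk]; rewrite !tofracM; ring.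
  rewrite /k7 /qscale /qmap; cbn [qr qi qj qk]; by rewrite tofracM mulrA (mulfK nl).
Qed.
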